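(* Fix a positive real number $k$ and set $m=m(n)=\lceil n/k\rceil$. Then the rate $\frac{\log_2|C_{n,m}|}{\binom{n}{2}}$ of the community code $C_{n,m}$ tends to $0$ as $n\to\infty$.
   Context: For integers $n\geq 2$, $N=\binom{n}{2}$ and $1\leq m\leq n$, the community code $C_{n,m}\subseteq\mathbb{F}_2^N$ consists of exactly those binary vectors of length $N$ that are the upper-triangular (off-diagonal) part of the adjacency matrix of a simple undirected graph on the labeled vertex set $\{1,\ldots,n\}$ which is a disjoint union of cliques, each clique having at least $m$ vertices. The rate of $C_{n,m}$ is $\log_2|C_{n,m}|/N$. *)

(* Defs.v *)
From HB Require Import structures.
From mathcomp Require Import all_boot all_order all_algebra.
From mathcomp Require Import reals exp.
Set Implicit Arguments. Unset Strict Implicit. Unset Printing Implicit Defensive.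
Import Order.TTheory GRing.Theory Num.Theory.

Definition upair (n : nat) := {p : 'I_n * 'I_n | (p.1 < p.2)%N}.

Definition word (n : nat) := {ffun upair n -> bool}.

(* The community code C_{n,m}: the upper-triangular parts of adjacency matrices of
   graphs on {0..n-1} that are disjoint unions of cliques (the blocks of a partition P
   of the vertex set; two vertices adjacent iff in the same block), each clique having
   at least m vertices. *)
Definition community_code (n m : nat) : {set word n} :=
  [set x : word n | [exists P : {set {set 'I_n}},
     [&& partition P [set: 'I_n],
         [forall B in P, (m <= #|B|)%N] &
         [forall p : upair n,
            x p == (pblock P (val p).1 == pblock P (val p).2)]]]].

Definition rate (R : realType) (n m : nat) : R :=
  (ln (#|community_code n m|%:R : R) / ln 2) / ('C(n, 2))%:R.

Definition mk (R : realType) (k : R) (n : nat) : nat :=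
  `|Num.ceil (n%:R / k)|%N.

(* Main.v *)
Require Import Defs.
From HB Require Import structures.
From mathcomp Require Import all_boot all_order all_algebra.
From mathcomp Require Import reals exp lra.
Import Order.TTheory GRing.Theory Num.Theory.

Lemma card_code_le (n m K : nat) :
  (forall P : {set {set 'I_n}}, partition P [set: 'I_n] ->
     (forall B, B \in P -> m <= #|B|) -> #|P| <= K.+1) ->
  #|community_code n m| <= K.+1 ^ n.
Proof.
move=> HP.
pose g (f : {ffun 'I_n -> 'I_K.+1}) : word n :=
  [ffun p : upair n => f (val p).1 == f (val p).2].
apply: (@leq_trans #|[set g f | f in [set: {ffun 'I_n -> 'I_K.+1}]]|).
  apply: subset_leq_card; apply/subsetP => x.
  rewrite inE => /existsP [P /and3P [Hpart /forallP Hm /forallP Hx]].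
  have HPK : #|P| <= K.+1.
    by apply: HP => // B HB; move: (Hm B); rewrite HB.
  have Hcov : cover P = [set: 'I_n] by move: Hpart => /and3P [/eqP -> _ _].
  have Hmem : forall i, pblock P i \in enum P.
    by move=> i; rewrite mem_enum; apply: pblock_mem; rewrite Hcov inE.
  pose f := [ffun i : 'I_n => (inord (index (pblock P i) (enum P)) : 'I_K.+1)].
  apply/imsetP; exists f; first by rewrite inE.
  apply/ffunP => p; rewrite ffunE (eqP (Hx p)) !ffunE.
  have Hlt : forall i, index (pblock P i) (enum P) < K.+1.
    move=> i; apply: leq_trans HPK; rewrite cardE index_mem; exact: Hmem.
  apply/idP/idP => [/eqP -> // | /eqP /(congr1 val)].
  rewrite /= !inordK // => /(congr1 (nth set0 (enum P))).
  by rewrite !nth_index // => ->.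
apply: leq_trans (leq_imset_card _ _) _.
by rewrite cardsT card_ffun !card_ord.
Qed.
Local Open Scope ring_scope.

Lemma ceil_nat_ge (R : realType) (x : R) : 0 <= x -> x <= (`|Num.ceil x|%N)%:R.
Proof.
move=> x0; rewrite natr_absz ger0_norm; first exact: ceil_ge.
by rewrite ceil_ge0; lra.
Qed.

Lemma nblocks (n m : nat) (P : {set {set 'I_n}}) : partition P [set: 'I_n] ->
  (forall B, B \in P -> (m <= #|B|)%N) -> (#|P| * m <= n)%N.
Proof.
move=> Hp Hm; rewrite -sum_nat_const.
apply: (@leq_trans (\sum_(A in P) #|A|)); first by apply: leq_sum => B HB; exact: Hm.
by rewrite -(card_partition Hp) cardsT card_ord.
Qed.

Lemma nblocks_k (R : realType) (k : R) (hk : 0 < k) (n : nat) (P : {set {set 'I_n}}) :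
  (0 < n)%N -> partition P [set: 'I_n] ->
  (forall B, B \in P -> (mk k n <= #|B|)%N) -> (#|P| <= `|Num.ceil k|%N)%N.
Proof.
move=> n0 Hp Hm; have H := @nblocks _ _ _ Hp Hm.
have Hm' : n%:R / k <= (mk k n)%:R :> R.
  by apply: ceil_nat_ge; apply: divr_ge0; [exact: ler0n | exact: ltW].
have HR : (#|P|%:R * (mk k n)%:R <= n%:R :> R) by rewrite -natrM ler_nat.
have Hn : (0 < n%:R :> R) by rewrite ltr0n.
have HPk : #|P|%:R <= k.
  have H1 : #|P|%:R * (n%:R / k) <= n%:R :> R.
    apply: le_trans HR; apply: ler_wpM2l => //; exact: ler0n.
  move: H1; rewrite mulrA ler_pdivrMr // => H1.
  by rewrite -(ler_pM2r Hn) [X in _ <= X]mulrC.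
rewrite -(ler_nat R); apply: le_trans HPk _; apply: ceil_nat_ge; exact: ltW.
Qed.

Lemma bin2_mul2 n : ('C(n,2) * 2 = n * n.-1)%N.
Proof. by rewrite -[2%N]/(2`!) bin_ffact; case: n => // n; rewrite ffactnS ffactn1. Qed.

Theorem corollary1 (R : realType) (k : R) (hk : 0 < k) :
  forall eps : R, 0 < eps ->
  exists N : nat, forall n : nat, (N <= n)%N -> (2 <= n)%N -> (mk k n <= n)%N ->
    `|rate R n (mk k n)| < eps.
Proof.
move=> eps he.
set K := `|Num.ceil k|%N.
have l2 : 0 < ln (2 : R) by apply: ln_gt0; lra.
set c := ln (K.+1%:R : R) / ln 2.
have c0 : 0 <= c.
  by apply: divr_ge0; [apply: ln_ge0; rewrite ler1n | exact: ltW].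
exists (`|Num.ceil (2 * c / eps)|%N.+2) => n hN hn _.
have n0 : (0 < n)%N by apply: leq_trans hn.
have hcard : (#|community_code n (mk k n)| <= K.+1 ^ n)%N.
  apply: card_code_le => P Hp Hm.
  exact: leq_trans (@nblocks_k _ _ hk _ _ n0 Hp Hm) (leqnSn _).
rewrite /rate.
set C := #|community_code n (mk k n)|.
have hC2 : ('C(n,2))%:R * 2 = n%:R * (n.-1)%:R :> R.
  by rewrite -[RHS]natrM -bin2_mul2 natrM.
have hd : 2 * c / eps < (n.-1)%:R.
  have := @ceil_nat_ge R (2 * c / eps).
  have h0 : 0 <= 2 * c / eps by apply: divr_ge0; [lra | exact: ltW].
  move=> /(_ h0) h1; apply: le_lt_trans h1 _; rewrite ltr_nat.
  by move: hN; case: n {hcard C hC2 n0 hn} => //= n; rewrite ltnS.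
have hd' : 2 * c < eps * (n.-1)%:R.
  by move: hd; rewrite ltr_pdivrMr // [X in _ < X]mulrC.
have hnR : (0 < n%:R :> R) by rewrite ltr0n.
have hCn : (0 < ('C(n,2))%:R :> R).
  by rewrite ltr0n bin_gt0.
have [C0|Cpos] := posnP C.
  by rewrite C0 ln0 // !mul0r normr0.
have CR : (1 <= C%:R :> R) by rewrite ler1n.
have la : 0 <= ln (C%:R : R) by apply: ln_ge0.
have lb : ln (C%:R : R) <= ln (K.+1%:R : R) *+ n.
  rewrite -lnXn ?ltr0n //; rewrite ler_ln ?posrE ?ltr0n ?exprn_gt0 //.
  by rewrite -natrX ler_nat.
have lb' : ln (C%:R : R) / ln 2 <= c * n%:R.
  have -> : c * n%:R = (ln (K.+1%:R : R) *+ n) / ln 2 by rewrite /c mulrAC mulr_natr.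
  by rewrite ler_pM2r ?invr_gt0.
rewrite ger0_norm; last by apply: divr_ge0; [apply: divr_ge0; [ | exact: ltW] | exact: ltW].
rewrite ltr_pdivrMr //.
apply: le_lt_trans lb' _.
have : 2 * c * n%:R < eps * (n.-1)%:R * n%:R by rewrite ltr_pM2r.
nra.
Qed.
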